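(* Let $x_0<\dots<x_n$ and $\hat x_0<\dots<\hat x_n$ be real numbers with $\hat x_0=x_0$, $\hat x_n=x_n$, let $\mathbf{y}\in\mathbb{R}^{n+1}$, let $z_k=z_k(\mathbf{x},\hat{\mathbf{x}})$, and suppose $\Lambda(\hat{\mathbf{x}})\|\mathbf{z}\|_\infty<1$. Then for every $t\in[x_0,x_n]$, \[ \frac{|E(t;\mathbf{y},\mathbf{z})|}{1+\Lambda(\hat{\mathbf{x}})\|\mathbf{z}\|_\infty}\ \le\ \bigl|q(t;\hat{\mathbf{x}},\mathbf{y},\lambda(\mathbf{x}))-P_{\mathbf{y}}(t)\bigr|\ \le\ \frac{|E(t;\mathbf{y},\mathbf{z})|}{1-\Lambda(\hat{\mathbf{x}})\|\mathbf{z}\|_\infty}, \] and for each such $t$ there exists $\mathbf{y}'\in\mathbb{R}^{n+1}$ with $q(t;\hat{\mathbf{x}},\mathbf{y},\lambda(\mathbf{x}))=P_{\mathbf{y}'}(t)$ and \[ |y'_k-y_k|\le\frac{|z_k|+\Lambda(\hat{\mathbf{x}})\|\mathbf{z}\|_\infty}{1-\Lambda(\hat{\mathbf{x}})\|\mathbf{z}\|_\infty}\,|y_k|\qquad(0\le k\le n). \]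
   Context: $\lambda_k(\mathbf{x}):=1/\prod_{j\neq k}(x_k-x_j)$; $z_k(\mathbf{x},\hat{\mathbf{x}}):=(\lambda_k(\mathbf{x})-\lambda_k(\hat{\mathbf{x}}))/\lambda_k(\hat{\mathbf{x}})$. The second barycentric formula is $q(t;\mathbf{u},\mathbf{y},\mathbf{w}):=\dfrac{\sum_{k}\frac{w_ky_k}{t-u_k}}{\sum_k\frac{w_k}{t-u_k}}$, with value $y_k$ at $t=u_k$ (its limit). For $\mathbf{v}\in\mathbb{R}^{n+1}$, $P_{\mathbf{v}}$ is the polynomial of degree $\le n$ with $P_{\mathbf{v}}(\hat x_k)=v_k$; $\mathbf{y}\mathbf{z}$ is the componentwise product. The error polynomial is $E(t;\mathbf{y},\mathbf{z}):=P_{\mathbf{y}\mathbf{z}}(t)-P_{\mathbf{y}}(t)P_{\mathbf{z}}(t)$. $\Lambda(\hat{\mathbf{x}}):=\max_{t\in[x_0,x_n]}\sum_j|\ell_j(t)|$ with $\ell_j$ the Lagrange polynomials for $\hat{\mathbf{x}}$. *)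

(* Defs.v *)
From HB Require Import structures.
From mathcomp Require Import all_boot all_order all_algebra.
From mathcomp Require Import boolp classical_sets reals.
Set Implicit Arguments. Unset Strict Implicit. Unset Printing Implicit Defensive.
Import Order.TTheory GRing.Theory Num.Theory.
Local Open Scope ring_scope.
Local Open Scope classical_set_scope.

Section Defs.
Variables (R : realType) (n : nat).
Implicit Types (x u xh v y w : 'I_n.+1 -> R) (t : R).

Definition bary_lambda x (k : 'I_n.+1) : R :=
  (\prod_(j < n.+1 | j != k) (x k - x j))^-1.

Definition zvec x xh (k : 'I_n.+1) : R :=
  (bary_lambda x k - bary_lambda xh k) / bary_lambda xh k.

Definition bary2 t u y w : R :=
  if [pick k | t == u k] is Some k then y k
  else (\sum_k w k * y k / (t - u k)) / (\sum_k w k / (t - u k)).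

Definition lagr xh (j : 'I_n.+1) t : R :=
  \prod_(i < n.+1 | i != j) ((t - xh i) / (xh j - xh i)).

Definition interp xh v t : R := \sum_j v j * lagr xh j t.

Definition vmul y w : 'I_n.+1 -> R := fun k => y k * w k.

Definition err_poly xh y w t : R :=
  interp xh (vmul y w) t - interp xh y t * interp xh w t.

Definition lebesgue xh : R :=
  sup [set (\sum_j `|lagr xh j t|) | t in [set t | xh ord0 <= t <= xh ord_max]].

Definition ninf w : R := \big[Num.max/0]_k `|w k|.

End Defs.

(* Main.v *)
Require Import Defs.
From HB Require Import structures.
From mathcomp Require Import all_boot all_order all_algebra.
From mathcomp Require Import boolp classical_sets reals.
From mathcomp Require Import zify ring lra.
Import Order.TTheory GRing.Theory Num.Theory.
Local Open Scope ring_scope.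

Section Aux.
Variables (R : realType) (n : nat) (xh : 'I_n.+1 -> R).
Hypothesis hxh : forall i j : 'I_n.+1, (i < j)%N -> xh i < xh j.

Lemma xh_neq (i j : 'I_n.+1) : i != j -> xh i != xh j.
Proof.
move=> ij; have : (val i != val j) by [].
rewrite neq_ltn => /orP [h|h].
  by rewrite lt_eqF // hxh.
by rewrite gt_eqF // hxh.
Qed.

Lemma xh_inj : injective xh.
Proof. by move=> i j e; apply/eqP; apply/negP => /negP/xh_neq; rewrite e eqxx. Qed.

Lemma blam_neq0 (j : 'I_n.+1) : bary_lambda xh j != 0.
Proof.
rewrite /bary_lambda invr_eq0; apply/prodf_neq0 => i ij.
by rewrite subr_eq0 xh_neq // eq_sym.
Qed.

Lemma lagr_eq (j : 'I_n.+1) t :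
  lagr xh j t = bary_lambda xh j * \prod_(i < n.+1 | i != j) (t - xh i).
Proof.
by rewrite /lagr /bary_lambda big_split /= prodfV mulrC.
Qed.

Lemma lagr_node (j m : 'I_n.+1) : lagr xh j (xh m) = (j == m)%:R.
Proof.
rewrite lagr_eq; have [<-|jm] := eqVneq j m.
  rewrite /bary_lambda mulVf //; apply/prodf_neq0 => i ij.
  by rewrite subr_eq0 xh_neq // eq_sym.
by rewrite (bigD1 m) 1?eq_sym //= subrr mul0r mulr0.
Qed.

Lemma sum_lagr t : \sum_j lagr xh j t = 1.
Proof.
pose p : {poly R} := \sum_j (bary_lambda xh j)%:P * \prod_(i < n.+1 | i != j) ('X - (xh i)%:P) - 1.
have pt : forall s, p.[s] = \sum_j lagr xh j s - 1.
  move=> s; rewrite /p hornerD hornerN hornerC horner_sum; congr (_ - _).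
  apply: eq_bigr => j _; rewrite hornerM hornerC horner_prod lagr_eq; congr (_ * _).
  by apply: eq_bigr => i _; rewrite hornerXsubC.
have p0 : p = 0.
  apply: (@roots_geq_poly_eq0 _ p (map xh (enum 'I_n.+1))).
  - apply/allP => s /mapP [m _ ->]; rewrite /root pt.
    rewrite (bigD1 m) //= lagr_node eqxx big1 ?addr0 ?subrr //.
    by move=> j jm; rewrite lagr_node (negPf jm).
  - by rewrite map_inj_uniq ?enum_uniq //; exact: xh_inj.
  - rewrite size_map size_enum_ord /p.
    apply: leq_trans (size_polyD _ _) _; rewrite size_polyN size_poly1 geq_max andbT.
    apply: leq_trans (size_sum _ _ _) _; apply/bigmax_leqP => j _.
    rewrite mul_polyC; apply: leq_trans (size_scale_leq _ _) _.
    rewrite size_prod; last by move=> i _; rewrite polyXsubC_eq0.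
    under eq_bigr do rewrite size_XsubC.
    rewrite sum_nat_const cardC1 card_ord /=. lia.
by have := pt t; rewrite p0 horner0 => /eqP; rewrite eq_sym subr_eq0 => /eqP.
Qed.

Lemma interp_node (v : 'I_n.+1 -> R) k : interp xh v (xh k) = v k.
Proof.
rewrite /interp (bigD1 k) //= lagr_node eqxx mulr1 big1 ?addr0 // => j jk.
by rewrite lagr_node (negPf jk) mulr0.
Qed.

Lemma leb_ub t : xh ord0 <= t <= xh ord_max ->
  \sum_j `|lagr xh j t| <= lebesgue xh.
Proof.
move=> ht; apply: sup_upper_bound; last by exists t.
split; first by exists (\sum_j `|lagr xh j t|), t.
pose B := `|xh ord0| + `|xh ord_max|.
exists (\sum_j `|bary_lambda xh j| * \prod_(i < n.+1 | i != j) (B + `|xh i|)).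
move=> r [s hs <-]; apply: ler_sum => j _.
rewrite lagr_eq normrM ler_wpM2l // normr_prod; apply: ler_prod => i _.
rewrite normr_ge0 /=; apply: le_trans (ler_normB _ _) _; rewrite lerD2r.
move: hs => /andP [hs1 hs2].
have h1 := ler_norm (xh ord_max); have h2 := ler_norm (- xh ord0).
rewrite normrN in h2; have h3 := normr_ge0 (xh ord0); have h4 := normr_ge0 (xh ord_max).
rewrite ler_norml /B; apply/andP; split; lra.
Qed.

Lemma ninf_ge (w : 'I_n.+1 -> R) k : `|w k| <= ninf w.
Proof.
rewrite /ninf; elim: (index_enum _) (mem_index_enum k) => //= a r IH.
rewrite big_cons inE => /orP [/eqP ->|h]; rewrite le_max ?lexx //.
by rewrite IH ?orbT.
Qed.

Lemma ninf_ge0 (w : 'I_n.+1 -> R) : 0 <= ninf w.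
Proof.
rewrite /ninf; elim: (index_enum _) => [|a r IH]; rewrite ?big_nil ?big_cons //.
by rewrite le_max IH orbT.
Qed.

Lemma interp_bound (w : 'I_n.+1 -> R) t :
  `|interp xh w t| <= ninf w * \sum_j `|lagr xh j t|.
Proof.
rewrite /interp; apply: le_trans (ler_norm_sum _ _ _) _; rewrite mulr_sumr.
by apply: ler_sum => j _; rewrite normrM ler_wpM2r // ninf_ge.
Qed.

End Aux.

Section Main.
Variables (R : realType) (n : nat) (x xh y : 'I_n.+1 -> R).
Hypothesis hx : forall i j : 'I_n.+1, (i < j)%N -> x i < x j.
Hypothesis hxh : forall i j : 'I_n.+1, (i < j)%N -> xh i < xh j.

Lemma blam_x_eq k : bary_lambda x k = bary_lambda xh k * (1 + zvec x xh k).
Proof.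
have := @blam_neq0 _ _ _ hxh k; rewrite /zvec => h; field; exact: h.
Qed.

Lemma onez_neq0 k : 1 + zvec x xh k != 0.
Proof.
apply: contraTneq (@blam_neq0 _ _ _ hx k) => e.
by rewrite blam_x_eq e mulr0 eqxx.
Qed.

Lemma bary_id t : 1 + interp xh (zvec x xh) t != 0 ->
  bary2 t xh y (bary_lambda x) =
  (interp xh y t + interp xh (vmul y (zvec x xh)) t) / (1 + interp xh (zvec x xh) t).
Proof.
move=> hP; rewrite /bary2; case: pickP => [k /eqP -> | hno].
  rewrite !(@interp_node _ _ _ hxh) /vmul -{2}[y k]mulr1 -mulrDr mulfK //.
  exact: onez_neq0.
set l := \prod_i (t - xh i).
have tk : forall k, t - xh k != 0 by move=> k; rewrite subr_eq0 hno.
have l0 : l != 0 by apply/prodf_neq0 => i _; exact: tk.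
have key : forall k, bary_lambda x k / (t - xh k) = (1 + zvec x xh k) * lagr xh k t / l.
  move=> k; rewrite blam_x_eq /l (bigD1 k) //= lagr_eq.
  have := tk k; have : \prod_(i < n.+1 | i != k) (t - xh i) != 0.
    by apply/prodf_neq0 => i _; exact: tk.
  move=> h1 h2; field; rewrite h1 h2 //.
have N : \sum_k bary_lambda x k * y k / (t - xh k) =
    (interp xh y t + interp xh (vmul y (zvec x xh)) t) / l.
  rewrite /interp /vmul -big_split /= mulr_suml; apply: eq_bigr => k _.
  rewrite mulrAC key; field; exact: l0.
have D : \sum_k bary_lambda x k / (t - xh k) = (1 + interp xh (zvec x xh) t) / l.
  rewrite -(@sum_lagr _ _ _ hxh t) /interp -big_split /= mulr_suml; apply: eq_bigr => k _.
  rewrite key; field; exact: l0.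
rewrite N D; field; rewrite hP l0 //.
Qed.
End Main.

Theorem theorem3 (R : realType) (n : nat) (x xh y : 'I_n.+1 -> R)
  (hx : forall i j : 'I_n.+1, (i < j)%N -> x i < x j)
  (hxh : forall i j : 'I_n.+1, (i < j)%N -> xh i < xh j)
  (h0 : xh ord0 = x ord0) (hn : xh ord_max = x ord_max)
  (hL : lebesgue xh * ninf (zvec x xh) < 1) :
  forall t : R, x ord0 <= t <= x ord_max ->
    let z := zvec x xh in
    let L := lebesgue xh * ninf z in
    let qv := bary2 t xh y (bary_lambda x) in
    `|err_poly xh y z t| / (1 + L) <= `|qv - interp xh y t| /\
    `|qv - interp xh y t| <= `|err_poly xh y z t| / (1 - L) /\
    exists y' : 'I_n.+1 -> R,
      qv = interp xh y' t /\
      forall k : 'I_n.+1, `|y' k - y k| <= (`|z k| + L) / (1 - L) * `|y k|.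
Proof.
move=> t ht z L qv.
set c := interp xh z t.
have hc : `|c| <= L.
  apply: le_trans (@interp_bound _ _ _ _ _) _.
  rewrite /L [lebesgue _ * _]mulrC; apply: ler_wpM2l; first exact: ninf_ge0.
  apply: leb_ub.
  by rewrite h0 hn.
have hc1 : c <= `|c| := ler_norm c.
have hc2 : - c <= `|c| by rewrite -normrN ler_norm.
have hL' : L < 1 by [].
have pos : 0 < 1 + c by lra.
have nc : `|1 + c| = 1 + c by rewrite ger0_norm // ltW.
have hq : qv = (interp xh y t + interp xh (vmul y z) t) / (1 + c).
  by apply: bary_id => //; rewrite lt0r_neq0.
set a := interp xh y t; set b := interp xh (vmul y z) t.
have hE : qv - a = err_poly xh y z t / (1 + c).
  rewrite hq /err_poly -/a -/b -/c; field; rewrite lt0r_neq0 //.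
have hn1 : `|qv - a| = `|err_poly xh y z t| / (1 + c).
  by rewrite hE normrM normfV nc.
have u0 := normr_ge0 (err_poly xh y z t).
split; [|split].
- rewrite hn1 ler_wpM2l // lef_pV2 ?posrE; lra.
- rewrite hn1 ler_wpM2l // lef_pV2 ?posrE; lra.
exists (fun k => (1 + z k) * y k / (1 + c)); split.
  rewrite hq /a /b /interp /vmul -big_split /= mulr_suml; apply: eq_bigr => k _.
  field; rewrite lt0r_neq0 //.
move=> k.
have -> : (1 + z k) * y k / (1 + c) - y k = (z k - c) / (1 + c) * y k.
  field; rewrite lt0r_neq0 //.
rewrite normrM ler_wpM2r // normrM normfV nc.
apply: ler_pM => //.
- by rewrite invr_ge0 ltW.
- apply: le_trans (ler_normB _ _) _; lra.
- rewrite lef_pV2 ?posrE; lra.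
Qed.
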